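(* Let $q=2^m$ with $m\ge 4$ even. Then the trace code $\mathrm{Tr}_{q^2/q}(\mathcal C_{\{3,5\}})$ has parameters $[q+1,4,q-4]_q$.
   Context: Let $U_{q+1}$ be the set of $(q+1)$-th roots of unity in $\mathrm{GF}(q^2)$; coordinates are indexed by $U_{q+1}$. Define $\mathcal C_{\{3,5\}}=\{(a_3u^3+a_{q-2}u^{q-2}+a_5u^5+a_{q-4}u^{q-4})_{u\in U_{q+1}}: a_3,a_{q-2},a_5,a_{q-4}\in\mathrm{GF}(q^2)\}$, and $\mathrm{Tr}_{q^2/q}(\mathcal C)=\{(\mathrm{Tr}_{q^2/q}(c_u))_{u\in U_{q+1}}:(c_u)\in\mathcal C\}$, where $\mathrm{Tr}_{q^2/q}(x)=x+x^q$. $[n,k,d]_q$ denotes a linear code over $\mathrm{GF}(q)$ of length $n$, dimension $k$, minimum distance $d$. *)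

(* Defs.v *)
From HB Require Import structures.
From mathcomp Require Import all_boot all_order all_algebra all_field.
Set Implicit Arguments. Unset Strict Implicit. Unset Printing Implicit Defensive.
Import GRing.Theory.
Local Open Scope ring_scope.

(* L plays the role of GF(q^2); q is the size of the subfield GF(q). *)

Definition GFq (L : finFieldType) (q : nat) : {set L} := [set x : L | x ^+ q == x].

(* U_{q+1}: the (q+1)-th roots of unity in L, as a finite (sub)type;
   it is the coordinate index set of the codes. *)
Definition Uq (L : finFieldType) (q : nat) := {u : L | u ^+ q.+1 == 1}.

Definition trq (L : finFieldType) (q : nat) (x : L) : L := x + x ^+ q.

Definition cw35 (L : finFieldType) (q : nat) (a : L * L * L * L) : {ffun Uq L q -> L} :=
  let: (a3, aq2, a5, aq4) := a in
  [ffun u => a3 * (val u) ^+ 3 + aq2 * (val u) ^+ (q - 2)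
             + a5 * (val u) ^+ 5 + aq4 * (val u) ^+ (q - 4)].

Definition C35 (L : finFieldType) (q : nat) : {set {ffun Uq L q -> L}} :=
  [set cw35 q a | a in [set: L * L * L * L]].

Definition trace_code (L : finFieldType) (q : nat) (C : {set {ffun Uq L q -> L}})
  : {set {ffun Uq L q -> L}} :=
  [set [ffun u => trq q (c u)] | c : {ffun Uq L q -> L} in C].

Definition hwt (L : finFieldType) (q : nat) (c : {ffun Uq L q -> L}) : nat :=
  #|[set u | c u != 0]|.

(* C is a GF(q)-linear code (entries in GF(q), closed under + and GF(q)-scaling)
   with parameters [n, k, d]_q : length n, q^k codewords (dimension k over GF(q)),
   minimum (Hamming) distance d = minimum weight of a nonzero codeword. *)
Definition is_code_params (L : finFieldType) (q : nat) (C : {set {ffun Uq L q -> L}})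
  (n k d : nat) : Prop :=
  (forall (c : {ffun Uq L q -> L}) u, c \in C -> c u \in GFq L q) /\
  (0 : {ffun Uq L q -> L}) \in C /\
  (forall c1 c2 : {ffun Uq L q -> L}, c1 \in C -> c2 \in C -> c1 + c2 \in C) /\
  (forall (l : L) (c : {ffun Uq L q -> L}), l \in GFq L q -> c \in C ->
     [ffun u => l * c u] \in C) /\
  #|{: Uq L q}| = n /\
  #|C| = (q ^ k)%N /\
  (exists2 c : {ffun Uq L q -> L}, c \in C & (c != 0) /\ hwt c = d) /\
  (forall c : {ffun Uq L q -> L}, c \in C -> c != 0 -> (d <= hwt c)%N).

(* Main.v *)
Require Import Defs.
From HB Require Import structures.
From mathcomp Require Import all_boot all_order all_algebra all_field.
From mathcomp Require Import cyclic ring zify.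
Set Implicit Arguments. Unset Strict Implicit. Unset Printing Implicit Defensive.
Import GRing.Theory.
Local Open Scope ring_scope.
Section S.
Variable m : nat.
Variable L : finFieldType.
Hypothesis hL : #|L| = (2 ^ m * 2 ^ m)%N.
Hypothesis hm : (1 <= m)%N.

Lemma char2 : 2 \in [pchar L].
Proof. apply: (@card_finPcharP _ _ (m + m)) => //; by rewrite expnD. Qed.

Lemma add2 (x : L) : x + x = 0.
Proof. exact: (addrr_pchar2 char2). Qed.

Lemma sqrD (x y : L) : (x + y) ^+ 2 = x ^+ 2 + y ^+ 2.
Proof. by rewrite sqrrD mulr2n add2 addr0. Qed.

Lemma frobD k (x y : L) : (x + y) ^+ (2 ^ k) = x ^+ (2 ^ k) + y ^+ (2 ^ k).
Proof.
elim: k => [|k IH]; first by rewrite !expr1.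
by rewrite expnS mulnC !exprM IH sqrD.
Qed.

Lemma expqq (x : L) : x ^+ (2 ^ m * 2 ^ m) = x.
Proof. by rewrite -hL expf_card. Qed.

Lemma sqrtK (x : L) : (x ^+ (2 ^ (m + m).-1)) ^+ 2 = x.
Proof.
rewrite -exprM -expnSr prednK ?addn_gt0 ?hm // expnD; exact: expqq.
Qed.
Local Notation q := (2 ^ m)%N.

Lemma frobq (x y : L) : (x + y) ^+ q = x ^+ q + y ^+ q.
Proof. exact: frobD. Qed.

Lemma trqD (x y : L) : trq q (x + y) = trq q x + trq q y.
Proof. by rewrite /trq frobq; ring. Qed.

Lemma trq_frob (x : L) : trq q (x ^+ q) = trq q x.
Proof. by rewrite /trq -exprM expqq addrC. Qed.

Lemma trq_fix (x : L) : trq q x ^+ q = trq q x.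
Proof. by rewrite {1}/trq frobq -exprM expqq addrC. Qed.

Lemma trqZ (l x : L) : l ^+ q = l -> trq q (l * x) = l * trq q x.
Proof. by move=> hl; rewrite /trq exprMn hl mulrDr. Qed.

Lemma uexp (u : L) (a b c : nat) : u ^+ q.+1 = 1 -> a = (b + q.+1 * c)%N -> u ^+ a = u ^+ b.
Proof. by move=> hu ->; rewrite exprD exprM hu expr1n mulr1. Qed.

Hypothesis hm4 : (4 <= m)%N.
Lemma q16 : (16 <= q)%N.
Proof. by rewrite -[16%N]/(2^4)%N leq_pexp2l. Qed.

Definition psi (A B : L) : {ffun Uq L q -> L} :=
  [ffun u => trq q (A * val u ^+ 3 + B * val u ^+ 5)].

Lemma uval (u : Uq L q) : val u ^+ q.+1 = 1.
Proof. exact/eqP/(valP u). Qed.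

Lemma cw_psi a3 a2 a5 a4 :
  [ffun u => trq q (cw35 q (a3, a2, a5, a4) u)] = psi (a3 + a2 ^+ q) (a5 + a4 ^+ q).
Proof.
have h16 := q16.
apply/ffunP => u; rewrite !ffunE !trqD !mulrDl !trqD.
rewrite -[trq q (a2 * _)]trq_frob -[trq q (a4 * _)]trq_frob !exprMn -!exprM.
rewrite (@uexp _ ((q - 2) * q) 3 (q - 3) (uval u)); last by nia.
rewrite (@uexp _ ((q - 4) * q) 5 (q - 5) (uval u)); last by nia.
by rewrite !addrA.
Qed.
Local Notation sq x := (x ^+ (2 ^ (m + m).-1)).

Lemma key_id (A B u : L) : u ^+ q.+1 = 1 ->
  u ^+ 5 * trq q (A * u ^+ 3 + B * u ^+ 5) =
  ((sq B) ^+ q + (sq A) ^+ q * u + sq A * u ^+ 4 + sq B * u ^+ 5) ^+ 2.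
Proof.
move=> hu; have h16 := q16.
have e1 : u ^+ 5 * u ^+ (3 * q) = u ^+ 2.
  by rewrite -exprD (@uexp _ _ 2 3 hu); last by nia.
have e2 : u ^+ 5 * u ^+ (5 * q) = 1.
  by rewrite -exprD (@uexp _ _ 0 5 hu) ?expr0; last by nia.
have sqq (x : L) : (sq x ^+ q) ^+ 2 = x ^+ q by rewrite exprAC sqrtK.
rewrite !sqrD !exprMn !sqq !sqrtK.
rewrite /trq frobq !exprMn.
rewrite !(mulnC 3) !(mulnC 5) !exprM in e1 e2 *.
move: e1 e2; set w := u ^+ q; set Aq := A ^+ q; set Bq := B ^+ q => e1 e2.
transitivity (A * u^+8 + B * u^+10 + Aq * (u^+5 * w^+3) + Bq * (u^+5 * w^+5)).
  ring.
rewrite e1 e2; ring.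
Qed.
Lemma zeros_le5 A B : (A != 0) || (B != 0) ->
  (#|[set u : Uq L q | psi A B u == 0%R]| <= 5)%N.
Proof.
move=> nz; set Z := [set u : Uq L q | _].
pose p : {poly L} := Poly [:: sq B ^+ q; sq A ^+ q; 0; 0; sq A; sq B].
have pn0 : p != 0.
  apply/eqP => p0.
  have c4 : sq A = 0 by move: (coef_Poly [:: sq B ^+ q; sq A ^+ q; 0; 0; sq A; sq B] 4); rewrite -/p p0 coef0.
  have c5 : sq B = 0 by move: (coef_Poly [:: sq B ^+ q; sq A ^+ q; 0; 0; sq A; sq B] 5); rewrite -/p p0 coef0.
  by move: nz; rewrite -(sqrtK A) -(sqrtK B) c4 c5 expr0n /= eqxx.
have := max_poly_roots (rs := map val (enum Z)) pn0.
rewrite size_map -cardE => H.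
have : (#|Z| < size p)%N.
  apply: H; last by rewrite map_inj_uniq ?enum_uniq //; exact: val_inj.
  apply/allP => x /mapP [u]; rewrite mem_enum inE ffunE => /eqP hu ->.
  have := key_id A B (uval u); rewrite hu mulr0 => /esym/eqP.
  rewrite expf_eq0 /= => /eqP h0.
  rewrite /root horner_Poly /=; apply/eqP; rewrite -[RHS]h0.
  set aq := sq A ^+ q; set bq := sq B ^+ q; set a := sq A; set b := sq B.
  by set v := sval u; ring.
move=> h; apply: leq_trans (_ : (size p).-1 <= 5)%N.
  by rewrite -ltnS (ltn_predK h).
by have := size_Poly [:: sq B ^+ q; sq A ^+ q; 0; 0; sq A; sq B]; rewrite -/p /=; case: (size p).
Qed.
Local Notation N := (q * q - 1)%N.

Lemma prim_exists : exists g : L, N.-primitive_root g.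
Proof.
have h16 := q16.
have : has N.-primitive_root (enum [pred x : L | x != 0]).
apply: has_prim_root.
- by nia.
- apply/allP => x; rewrite mem_enum inE => nx; apply/unity_rootP.
  apply: (mulIf nx); rewrite mul1r -exprSr.
  have -> : N.+1 = (q * q)%N by nia.
  exact: expqq.
- exact: enum_uniq.
- rewrite -cardE (@eq_card _ _ (predC1 (0 : L))) // cardC1 hL; lia.
by case/hasP => g _ pg; exists g.
Qed.

Lemma cardU : #|{: Uq L q}| = q.+1.
Proof.
have h16 := q16.
have [g pg] := prim_exists.
rewrite card_sig; apply/eqP; rewrite eqn_leq; apply/andP; split.
  rewrite cardE; apply: max_unity_roots => //; last exact: enum_uniq.
  by apply/allP => x; rewrite mem_enum inE unity_rootE.
pose s := [seq g ^+ ((q - 1) * i) | i <- iota 0 q.+1].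
have -> : q.+1 = size s by rewrite size_map size_iota.
rewrite cardE; apply: uniq_leq_size.
  rewrite map_inj_in_uniq ?iota_uniq // => i j; rewrite !mem_iota !add0n => hi hj.
  move/eqP; rewrite (eq_prim_root_expr pg) !modn_small; last 2 first.
  - by nia.
  - by nia.
  by move/eqP => hij; nia.
move=> x /mapP [i _ ->]; rewrite mem_enum inE -exprM.
rewrite size_map size_iota.
have -> : ((q - 1) * i * q.+1 = N * i)%N by nia.
by rewrite exprM (prim_expr_order pg) expr1n.
Qed.
Hypothesis hev : ~~ odd m.

Lemma three_dvd : (3 %| q - 1)%N.
Proof.
have hq : q = (4 ^ m./2)%N.
  by rewrite -{1}(odd_double_half m) (negbTE hev) add0n -muln2 mulnC expnM.
rewrite -eqn_mod_dvd; last by rewrite hq expn_gt0.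
by rewrite hq -modnXm (_ : 4 %% 3 = 1)%N // exp1n.
Qed.

Lemma not1_of_prim (g : L) k : N.-primitive_root g -> (0 < k < N)%N -> g ^+ k != 1.
Proof.
move=> pg /andP [k0 kN]; rewrite -(prim_order_dvd pg).
by apply/negP => /(dvdn_leq k0); rewrite leqNgt kN.
Qed.

Lemma exist_good : exists x1 w : L,
  [/\ x1 ^+ q.+1 = 1, x1 != 1, x1 ^+ 2 != 1 & x1 ^+ 2 + x1 + 1 != 0] /\
      (w ^+ q = w /\ w ^+ 2 + w + 1 = 0).
Proof.
have h16 := q16.
have [g pg] := prim_exists.
have [t ht] : exists t, (q - 1 = 3 * t)%N.
  by have /dvdnP [t ht] := three_dvd; exists t; rewrite ht mulnC.
have hN : N = ((q - 1) * q.+1)%N by nia.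
exists (g ^+ (q - 1)), (g ^+ (t * q.+1)); split; [split|split].
- by rewrite -exprM -hN (prim_expr_order pg).
- by rewrite -(expr1 (g ^+ _)) -exprM; apply: not1_of_prim => //; apply/andP; split; nia.
- by rewrite -exprM; apply: not1_of_prim => //; apply/andP; split; nia.
- apply/eqP => h.
  have : g ^+ ((q - 1) * 3) == 1.
    rewrite exprM; apply/eqP/eqP; rewrite -subr_eq0.
    have -> : (g ^+ (q - 1)) ^+ 3 - 1 = (g ^+ (q - 1) - 1) * ((g ^+ (q - 1)) ^+ 2 + g ^+ (q - 1) + 1) by ring.
    by rewrite h mulr0.
  by apply/negP; apply: not1_of_prim => //; apply/andP; split; nia.
- rewrite -exprM.
  have -> : (t * q.+1 * q = t * q.+1 + N * t)%N by nia.
  by rewrite exprD [g ^+ (N * t)]exprM (prim_expr_order pg) expr1n mulr1.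
- set w := g ^+ _.
  have w3 : w ^+ 3 = 1.
    rewrite -exprM; have -> : (t * q.+1 * 3 = N)%N by nia.
    exact: (prim_expr_order pg).
  have w1 : w - 1 != 0.
    by rewrite subr_eq0; apply: not1_of_prim => //; apply/andP; split; nia.
  have : (w - 1) * (w ^+ 2 + w + 1) == 0.
    have -> : (w - 1) * (w ^+ 2 + w + 1) = w ^+ 3 - 1 by ring.
    by rewrite w3 subrr.
  by rewrite mulf_eq0 (negbTE w1) /= => /eqP.
Qed.
Lemma two0 : (2 : L) = 0.
Proof. exact: (pcharf0 char2). Qed.

Local Notation Q y u := (u ^+ 2 + y * u + 1).

Lemma factor5 (y1 y2 u : L) : y1 * y2 = y1 + y2 ->
  1 + (1 + y1 + y2) * u + (1 + y1 + y2) * u ^+ 4 + u ^+ 5 = (u + 1) * Q y1 u * Q y2 u.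
Proof.
move=> h.
have -> : (u + 1) * Q y1 u * Q y2 u = 1 + (1 + y1 + y2) * u + (1 + y1 + y2) * u ^+ 4 + u ^+ 5
   + 2 * (u ^+ 3 + u ^+ 2) * (1 + y1 + y2) + (y1 * y2 - y1 - y2) * (u ^+ 3 + u ^+ 2) by ring.
by rewrite two0 h mul0r mul0r addr0 (_ : y1 + y2 - y1 - y2 = 0) ?mul0r ?addr0 //; ring.
Qed.

Lemma zero_of_P (a u : L) : a ^+ q = a -> u ^+ q.+1 = 1 ->
  1 + a * u + a * u ^+ 4 + u ^+ 5 = 0 -> trq q (a ^+ 2 * u ^+ 3 + u ^+ 5) = 0.
Proof.
move=> ha hu hP.
have := key_id (a ^+ 2) 1 hu.
rewrite [(a ^+ 2) ^+ _]exprAC sqrtK !expr1n ha mul1r hP expr0n /= => /eqP.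
rewrite mulf_eq0 expf_eq0 /= => /orP [/eqP u0|/eqP //].
by move: hu; rewrite u0 expr0n => /esym/eqP; rewrite oner_eq0.
Qed.

Lemma L1 (y u : L) : Q y u = 0 -> y != 0 -> u != 1.
Proof.
move=> h yn; apply/eqP => u1; move: h; rewrite u1 expr1n mulr1 addrAC add2 add0r.
by move/eqP; rewrite (negbTE yn).
Qed.

Lemma L2 (ya yb u v : L) : Q ya u = 0 -> Q yb v = 0 -> ya != yb -> u != v.
Proof.
move=> hu hv nab; apply/eqP => e; subst v.
have e : (ya - yb) * u = Q ya u - Q yb u by ring.
have : (ya - yb) * u = 0 by rewrite e hu hv subrr.
move/eqP; rewrite mulf_eq0 subr_eq0 (negbTE nab) /= => /eqP u0.
by move: hu; rewrite u0 expr0n mulr0 !add0r => /eqP; rewrite oner_eq0.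
Qed.

Lemma L3 (x : L) : x ^+ q.+1 = 1 -> x ^+ 2 != 1 -> x != x ^+ q.
Proof. by move=> hx h2; apply/eqP => e; move: hx; rewrite exprS -e -expr2 => /eqP; rewrite (negbTE h2). Qed.

Lemma L4 (x : L) : x != 1 -> x ^+ 2 != 1.
Proof.
move=> x1; apply/eqP => h.
have : (x + 1) ^+ 2 == 0 by rewrite sqrD h expr1n add2.
rewrite expf_eq0 /= addr_eq0 (oppr_pchar2 char2) => /eqP h1.
by move: x1; rewrite h1 eqxx.
Qed.

Lemma frobQ (y x : L) : y ^+ q = y -> Q y x = 0 -> Q y (x ^+ q) = 0.
Proof.
move=> hy h; have : (Q y x) ^+ q = 0 by rewrite h expr0n expn_eq0.
by rewrite !frobq [(y * x) ^+ q]exprMn hy expr1n exprAC.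
Qed.
Definition mkU (p : L) (hp : p ^+ q.+1 = 1) : Uq L q := exist _ p (introT eqP hp).

Lemma exist_min : exists a : L, a ^+ q = a /\
  (5 <= #|[set u : Uq L q | psi (a ^+ 2) 1%R u == 0%R]|)%N.
Proof.
have [x1 [w [[hx1 x1n1 x1sq x1Q] [wq w2]]]] := exist_good.
have hx1q : x1 * x1 ^+ q = 1 by rewrite -exprS.
have x1U := L3 hx1 x1sq.
have x1qU : (x1 ^+ q) ^+ q.+1 = 1 by rewrite exprAC hx1 expr1n.
have [y1 ey1] : exists y1, y1 = x1 + x1 ^+ q by eexists.
have y1q : y1 ^+ q = y1 by rewrite ey1; exact: (trq_fix x1).
have Q11 : Q y1 x1 = 0.
  rewrite ey1; move: hx1q; set xq := x1 ^+ q => hx1q.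
  have -> : Q (x1 + xq) x1 = 2 * x1 ^+ 2 + (x1 * xq - 1) + 2 by ring.
  by rewrite two0 hx1q subrr mul0r !add0r.
have y1n0 : y1 != 0.
  apply/eqP => h; move/eqP: h; rewrite ey1 addr_eq0 (oppr_pchar2 char2) => /eqP e.
  by move: x1U; rewrite -e eqxx.
have dn0 : y1 + 1 != 0.
  have e : x1 ^+ 2 + x1 + 1 = x1 * (y1 + 1) + (1 - x1 * x1 ^+ q) by rewrite ey1; ring.
  by move: x1Q; rewrite e hx1q subrr addr0 mulf_eq0 negb_or => /andP [].
have [d ed] : exists d, d = y1 + 1 by eexists.
rewrite -ed in dn0.
have dq : d ^+ q = d by rewrite ed frobq y1q expr1n.
have [y2 ey2] : exists y2, y2 = y1 / d by eexists.
have [x2 ex2] : exists x2, x2 = (x1 + w * y1) / d by eexists.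
have [a ea] : exists a, a = 1 + y1 + y2 by eexists.
have y2q : y2 ^+ q = y2 by rewrite ey2 exprMn exprVn y1q dq.
have aq : a ^+ q = a by rewrite ea (frobq (1 + y1)) (frobq 1 y1) expr1n y1q y2q.
have y12 : y1 * y2 = y1 + y2.
  apply: (mulIf dn0); rewrite mulrDl ey2 -mulrA !divfK //.
  by rewrite ed mulrDr mulr1 -addrA add2 addr0.
have Q12 : Q y1 (x1 ^+ q) = 0 := frobQ y1q Q11.
have Q22 : Q y2 x2 = 0.
  have e : Q y2 x2 = ((x1 + w * y1) ^+ 2 + y1 * (x1 + w * y1) + d ^+ 2) / d ^+ 2.
    by rewrite ex2 ey2; field; rewrite dn0.
  have e2 : (x1 + w * y1) ^+ 2 + y1 * (x1 + w * y1) + d ^+ 2 =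
    Q y1 x1 + y1 ^+ 2 * (w ^+ 2 + w + 1) + 2 * (w * x1 * y1 + y1) by rewrite ed; ring.
  by rewrite e e2 Q11 w2 two0 !mul0r mulr0 !addr0 mul0r.
have Q22q : Q y2 (x2 ^+ q) = 0 := frobQ y2q Q22.
have hx2 : x2 ^+ q.+1 = 1.
  have e : x2 ^+ q = (x1 ^+ q + w * y1) / d.
    by rewrite ex2 exprMn exprVn frobq exprMn wq y1q dq.
  rewrite exprS e ex2.
  have eM : (x1 + w * y1) * (x1 ^+ q + w * y1) = d ^+ 2 +
     ((w ^+ 2 + w + 1) * y1 ^+ 2 - 2 * (y1 ^+ 2 + y1) + (x1 * x1 ^+ q - 1)).
    by rewrite ed ey1; ring.
  rewrite mulrACA -invfM eM w2 two0 hx1q subrr !mul0r subrr add0r addr0 -expr2.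
  by rewrite divff // expf_neq0.
have x2qU : (x2 ^+ q) ^+ q.+1 = 1 by rewrite exprAC hx2 expr1n.
have y2n0 : y2 != 0 by rewrite ey2 mulf_neq0 ?invr_neq0.
have y12n : y1 != y2.
  apply/eqP => e.
  have : y1 * y1 == 0.
    have : y2 * d = y1 by rewrite ey2 divfK.
    rewrite -e ed mulrDr mulr1 => h.
    by rewrite -(subrr y1) -{3}h addrK.
  by rewrite mulf_eq0 (negbTE y1n0).
have x2n1 : x2 != 1 := L1 Q22 y2n0.
have x2U := L3 hx2 (L4 x2n1).
have z5 p (hp : p ^+ q.+1 = 1) : (p + 1) * Q y1 p * Q y2 p = 0 ->
    mkU hp \in [set u : Uq L q | psi (a ^+ 2) 1%R u == 0%R].
  move=> hP; rewrite inE ffunE /= mul1r; apply/eqP; apply: zero_of_P aq hp _.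
  by rewrite ea factor5.
exists a; split => //.
pose s := [:: mkU (expr1n L q.+1); mkU hx1; mkU x1qU; mkU hx2; mkU x2qU].
have -> : 5%N = size s by [].
rewrite cardE; apply: uniq_leq_size.
  rewrite -(map_inj_uniq val_inj) /= !inE !negb_or.
  rewrite !(eq_sym 1) x1n1 (L1 Q12 y1n0) x2n1 (L1 Q22q y2n0) x1U x2U.
  by rewrite !(L2 Q11 Q22 y12n, L2 Q11 Q22q y12n, L2 Q12 Q22 y12n, L2 Q12 Q22q y12n).
move=> u hu; suff: all (fun v => v \in enum [set u : Uq L q | psi (a ^+ 2) 1%R u == 0%R]) s by move/allP; apply.
rewrite /= andbT !mem_enum; apply/and5P; split; apply: z5.
- by rewrite add2 !mul0r.
- by rewrite Q11 mulr0 mul0r.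
- by rewrite Q12 mulr0 mul0r.
- by rewrite Q22 mulr0.
- by rewrite Q22q mulr0.
Qed.
Lemma hwt_psi A B :
  (hwt (psi A B) + #|[set u : Uq L q | psi A B u == 0%R]|)%N = q.+1.
Proof.
transitivity #|{: Uq L q}|; last exact: cardU.
rewrite -(cardsC [set u : Uq L q | psi A B u == 0%R]) addnC; congr (_ + _).
by apply: eq_card => u; rewrite !inE.
Qed.

Lemma main : is_code_params (trace_code (C35 L q)) q.+1 4 (q - 4).
Proof.
have h16 := q16.
have tc : trace_code (C35 L q) = [set psi ab.1 ab.2 | ab in [set: L * L]].
  apply/setP => c; apply/imsetP/imsetP.
  - case=> c' /imsetP [[[[a3 a2] a5] a4] _ ->] ->.
    by exists (a3 + a2 ^+ q, a5 + a4 ^+ q); rewrite ?inE // cw_psi.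
  - case=> [[A B]] _ ->; exists (cw35 q (A, 0, B, 0)).
      by apply/imsetP; exists (A, 0, B, 0).
    by rewrite cw_psi expr0n expn_eq0 /= !addr0.
have memC c : c \in trace_code (C35 L q) <-> exists A B, c = psi A B.
  rewrite tc; split.
    by move/imsetP => [[A B] _ ->]; exists A, B.
  by move=> [A [B ->]]; apply/imsetP; exists (A, B); rewrite ?inE.
have psiD A B A' B' : psi A B + psi A' B' = psi (A + A') (B + B').
  by apply/ffunP => u; rewrite !ffunE -trqD; congr trq; ring.
have psi0 : psi 0 0 = 0.
  by apply/ffunP => u; rewrite !ffunE !mul0r addr0 /trq expr0n expn_eq0 /= addr0.
have nz_bound A B : (A != 0) || (B != 0) -> (q - 4 <= hwt (psi A B))%N.
  move=> nz; have := hwt_psi A B; have := zeros_le5 nz; lia.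
have nzAB A B : psi A B != 0 -> (A != 0) || (B != 0).
  by apply: contraR; rewrite negb_or !negbK => /andP [/eqP -> /eqP ->]; rewrite psi0.
have psi_inj : injective (fun ab : L * L => psi ab.1 ab.2).
  move=> [A B] [A' B'] /= e.
  have e0 : psi (A + A') (B + B') = 0.
    by rewrite -psiD e; apply/ffunP => u; rewrite !ffunE add2.
  have : ~~ ((A + A' != 0) || (B + B' != 0)).
    apply/negP => nz; have := zeros_le5 nz.
    rewrite e0 (_ : [set u | _] = [set: Uq L q]); last by apply/setP => u; rewrite !inE ffunE eqxx.
    by rewrite cardsT cardU; lia.
  rewrite negb_or !negbK !addr_eq0 !(oppr_pchar2 char2) => /andP [/eqP -> /eqP ->] //.
split.
  move=> c u /memC [A [B ->]]; by rewrite inE ffunE trq_fix.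
split.
  by apply/memC; exists 0, 0; rewrite psi0.
split.
  move=> c1 c2 /memC [A [B ->]] /memC [A' [B' ->]]; apply/memC.
  by exists (A + A'), (B + B'); rewrite psiD.
split.
  move=> l c; rewrite inE => /eqP hl /memC [A [B ->]]; apply/memC.
  exists (l * A), (l * B); apply/ffunP => u; rewrite !ffunE -trqZ //; congr trq; ring.
split; first exact: cardU.
split.
  rewrite tc card_imset // cardsT card_prod hL.
  by rewrite !expnS expn0 !mulnA muln1.
split.
  have [a [aq h5]] := exist_min.
  have nz : ((a ^+ 2) != 0) || (1 != 0 :> L) by rewrite oner_neq0 orbT.
  have hw : hwt (psi (a ^+ 2) 1) = (q - 4)%N.
    have := hwt_psi (a ^+ 2) 1; have := zeros_le5 nz; lia.
  exists (psi (a ^+ 2) 1); first by apply/memC; exists (a ^+ 2), 1.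
  split => //; apply/eqP => c0; move: hw; rewrite c0 /hwt.
  rewrite (_ : [set u | _] = set0) ?cards0; first lia.
  by apply/setP => u; rewrite !inE ffunE eqxx.
move=> c /memC [A [B ->]] nz; exact: nz_bound (nzAB _ _ nz).
Qed.
End S.

Theorem theorem22 (m : nat) (hm : (4 <= m)%N) (hev : ~~ odd m)
  (L : finFieldType) (hL : #|L| = (2 ^ m * 2 ^ m)%N) :
  is_code_params (trace_code (C35 L (2 ^ m)))
    (2 ^ m).+1 4 (2 ^ m - 4).
Proof.
apply: main => //; exact: leq_trans hm.
Qed.
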